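(* Let $n\ge1$. (1) The number of linked partitions of $[n]$ is $n!$. (2) For each $k$, the number of linked partitions of $[n]$ with exactly $k$ singly covered minimal elements is the signless Stirling number of the first kind $c(n,k)$. (3) For each $k$, the number of linked partitions $\pi$ of $[n]$ with $\beta(\pi)=k$ is the Eulerian number $A(n,k)$, where $\beta(\pi)$ is the number of singly covered elements $i$ with $i\ne\min(B[i])$ plus the number of singleton blocks of $\pi$.
   Context: Two finite sets of integers $E,F$ are nearly disjoint if for every $i\in E\cap F$ either ($i=\min(E)$, $|E|>1$, $i\ne\min(F)$) or ($i=\min(F)$, $|F|>1$, $i\ne\min(E)$). A linked partition of $[n]$ is a set of nonempty subsets (blocks) of $[n]$ with union $[n]$, any two distinct blocks nearly disjoint. Every element lies in exactly one or two blocks (singly/doubly covered); for singly covered $i$, $B[i]$ denotes the block containing $i$. A singly covered minimal element is a singly covered $i$ with $i=\min(B[i])$. $c(n,k)$ is the number of permutations of $[n]$ with exactly $k$ cycles; $A(n,k)$ is the number of permutations of $[n]$ with exactly $k-1$ descents. *)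

(* Defs.v *)
(* The ground set [n] = {1,...,n} is represented by 'I_n
   = {0,...,n-1} via the order isomorphism i |-> i+1 (only the order of
   elements matters in all definitions below). *)
From mathcomp Require Import all_boot all_fingroup.
Set Implicit Arguments. Unset Strict Implicit. Unset Printing Implicit Defensive.

Section LinkedPartitions.
Variable n : nat.
Local Notation T := 'I_n.

Definition is_min (i : T) (E : {set T}) : bool :=
  (i \in E) && [forall j in E, (i <= j)%N].

Definition nearly_disjoint (E F : {set T}) : bool :=
  [forall i in E :&: F,
     (is_min i E && (1 < #|E|) && ~~ is_min i F) ||
     (is_min i F && (1 < #|F|) && ~~ is_min i E)].

Definition linked_partition (P : {set {set T}}) : bool :=
  [&& set0 \notin P,
      \bigcup_(B in P) B == [set: T] &
      [forall E in P, forall F in P, (E != F) ==> nearly_disjoint E F]].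

Definition cover_mult (P : {set {set T}}) (i : T) : nat :=
  #|[set B in P | i \in B]|.

Definition singly_covered (P : {set {set T}}) (i : T) : bool :=
  cover_mult P i == 1%N.

Definition sc_minimal (P : {set {set T}}) (i : T) : bool :=
  singly_covered P i && [exists B in P, (i \in B) && is_min i B].

Definition sc_nonminimal (P : {set {set T}}) (i : T) : bool :=
  singly_covered P i && [exists B in P, (i \in B) && ~~ is_min i B].

Definition num_sc_minimal (P : {set {set T}}) : nat :=
  #|[set i : T | sc_minimal P i]|.

Definition beta (P : {set {set T}}) : nat :=
  #|[set i : T | sc_nonminimal P i]| + #|[set B in P | #|B| == 1%N]|.

Definition num_cycles (s : {perm T}) : nat := #|porbits s|.

(* descents: positions i (1 <= i < n in 1-based indexing) with s(i) > s(i+1) *)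
Definition num_descents (s : {perm T}) : nat :=
  #|[set i : T | [exists j : T, (val j == i.+1) && (s j < s i)%N]]|.

End LinkedPartitions.

Definition stirling1 (n k : nat) : nat :=
  #|[set s : {perm 'I_n} | num_cycles s == k]|.

Definition eulerian (n k : nat) : nat :=
  #|[set s : {perm 'I_n} | (num_descents s).+1 == k]|.

(* Main.v *)
Require Import Defs.
From mathcomp Require Import all_boot all_fingroup zify.
Set Implicit Arguments. Unset Strict Implicit. Unset Printing Implicit Defensive.

Section PartA.
Variable n : nat.
Local Notation T := 'I_n.
Implicit Types (a : {ffun T -> T}) (P : {set {set T}}) (B E F : {set T}).

Definition codeC : {set {ffun T -> T}} := [set a : {ffun T -> T} | [forall j, (a j <= j)%N]].
Definition blk a (i : T) : {set T} := [set j | (j == i) || (a j == i)].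
Definition keep a (i : T) : bool := (a i == i) || (1 < #|blk a i|)%N.
Definition LPof a : {set {set T}} := blk a @: [set i | keep a i].
Definition nochild a (i : T) : bool := [forall j, (a j == i) ==> (j == i)].

Lemma inC a : a \in codeC -> forall j, (a j <= j)%N.
Proof. by rewrite inE => /forallP. Qed.

Lemma is_min_uniq i i' B : is_min i B -> is_min i' B -> i = i'.
Proof.
case/andP=> iB /forall_inP mi; case/andP=> i'B /forall_inP mi'.
by apply/val_inj/eqP; rewrite eqn_leq mi // mi'.
Qed.

Lemma blk_id a i : i \in blk a i.
Proof. by rewrite inE eqxx. Qed.

Lemma min_blk a i : a \in codeC -> is_min i (blk a i).
Proof.
move=> aC; rewrite /is_min blk_id; apply/forall_inP=> j; rewrite inE.
by case/orP=> /eqP <-; rewrite ?leqnn ?inC.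
Qed.

Lemma blk_inj a : a \in codeC -> injective (blk a).
Proof.
move=> aC i i' e; apply: (is_min_uniq (min_blk i aC)); rewrite e; exact: min_blk.
Qed.

Lemma card_blk_gt1 a i : (1 < #|blk a i|)%N = ~~ nochild a i.
Proof.
apply/idP/idP.
  move=> h; apply/negP=> /forallP nc.
  have: blk a i \subset [set i].
    apply/subsetP=> j; rewrite !inE; case/orP=> // aj; exact: (implyP (nc j) aj).
  by move/subset_leq_card; rewrite cards1 leqNgt h.
case/forallPn=> j; rewrite negb_imply => /andP[/eqP aj nji].
rewrite (cardsD1 i) blk_id add1n ltnS card_gt0; apply/set0Pn; exists j.
by rewrite !inE nji aj eqxx orbT.
Qed.

Lemma keepE a i : keep a i = (a i == i) || ~~ nochild a i.
Proof. by rewrite /keep card_blk_gt1. Qed.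

Lemma keep_par a j : keep a (a j).
Proof.
rewrite keepE; case: (eqVneq (a j) j) => [e|ne]; first by rewrite e e eqxx.
apply/orP; right; apply/forallPn; exists j; by rewrite negb_imply eqxx eq_sym.
Qed.

Lemma LPof_linked a : a \in codeC -> linked_partition (LPof a).
Proof.
move=> aC; apply/and3P; split.
- apply/imsetP=> -[i _ e]; by move: (blk_id a i); rewrite -e inE.
- rewrite eqEsubset subsetT /=; apply/subsetP=> j _.
  apply/bigcupP; exists (blk a (a j)); first by apply: imset_f; rewrite inE keep_par.
  by rewrite inE eqxx orbT.
apply/forall_inP=> E /imsetP[i]; rewrite inE => ki ->.
apply/forall_inP=> F /imsetP[i']; rewrite inE => ki' ->.
apply/implyP=> neEF; apply/forall_inP=> x; rewrite !inE.
have ne : i != i' by apply: contraNneq neEF => ->.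
case/andP=> /orP[/eqP xi|axi] /orP[/eqP xi'|axi'].
- by move: ne; rewrite -xi -xi' eqxx.
- subst x; apply/orP; left; rewrite min_blk //=.
  have ai : a i != i by apply: contraNneq ne => e; rewrite -{1}e.
  move: ki; rewrite /keep (negPf ai) /= => -> /=.
  apply/negP=> /andP[_ /forall_inP h].
  have lt : (i' < i)%N by rewrite -(eqP axi') ltn_neqAle inC // andbT.
  by have := h i' (blk_id _ _); rewrite leqNgt lt.
- subst x; apply/orP; right; rewrite min_blk //=.
  have ai : a i' != i' by apply: contraNneq ne => e; rewrite -e (eqP axi).
  move: ki'; rewrite /keep (negPf ai) /= => -> /=.
  apply/negP=> /andP[_ /forall_inP h].
  have lt : (i < i')%N by rewrite -(eqP axi) ltn_neqAle inC // andbT.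
  by have := h i (blk_id _ _); rewrite leqNgt lt.
- by move: ne; rewrite -(eqP axi) -(eqP axi') eqxx.
Qed.

Definition par P (j : T) : T :=
  odflt j [pick i | (i != j) && [exists B in P, (j \in B) && is_min i B]].
Definition codeOf P : {ffun T -> T} := [ffun j => par P j].

Lemma codeOfK a : a \in codeC -> codeOf (LPof a) = a.
Proof.
move=> aC; apply/ffunP=> j; rewrite ffunE /par.
case: pickP => [i /andP[nij /exists_inP[B /imsetP[i0 ki0 ->] /andP[jB mi]]] | none] /=.
  have e := is_min_uniq mi (min_blk i0 aC); subst i0.
  by move: jB; rewrite inE eq_sym (negbTE nij) => /= /eqP.
case: (eqVneq (a j) j) => // ne; move: (none (a j)); rewrite ne /=.
move/negbT/negP => h; exfalso; apply: h; apply/exists_inP; exists (blk a (a j)).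
  by apply: imset_f; rewrite inE keep_par.
by rewrite inE eqxx orbT min_blk.
Qed.

Section LPfacts.
Variable P : {set {set T}}.
Hypothesis lpP : linked_partition P.

Lemma lp_nd E F : E \in P -> F \in P -> E != F -> nearly_disjoint E F.
Proof.
case/and3P: lpP => _ _ /forall_inP h EP FP ne.
by have /forall_inP/(_ F FP)/implyP/(_ ne) := h E EP.
Qed.

Lemma lp_nonmin_uniq E F j : E \in P -> F \in P -> j \in E -> j \in F ->
  ~~ is_min j E -> ~~ is_min j F -> E = F.
Proof.
move=> EP FP jE jF nE nF; apply/eqP/negPn/negP=> ne.
have /forall_inP/(_ j) := lp_nd EP FP ne.
rewrite inE jE jF (negbTE nE) (negbTE nF) /=; by move/(_ isT).
Qed.

Lemma lp_min_uniq E F i : E \in P -> F \in P -> is_min i E -> is_min i F -> E = F.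
Proof.
move=> EP FP mE mF; apply/eqP/negPn/negP=> ne.
have /forall_inP/(_ i) := lp_nd EP FP ne.
rewrite inE (andP mE).1 (andP mF).1 mE mF /= !andbF.
by move/(_ isT).
Qed.

Lemma lp_nonempty B : B \in P -> exists i, is_min i B.
Proof.
case/and3P: lpP => n0 _ _ BP.
have [x xB] : exists x, x \in B.
  by apply/set0Pn; apply: contraNneq n0 => <-.
case: (arg_minnP (fun i : T => nat_of_ord i) xB) => m mB hm.
by exists m; apply/andP; split => //; apply/forall_inP.
Qed.

Lemma lp_cover j : exists2 B, B \in P & j \in B.
Proof.
case/and3P: lpP => _ /eqP cov _.
have : j \in \bigcup_(B in P) B by rewrite cov inE.
by case/bigcupP=> B BP jB; exists B.
Qed.

Lemma par_spec B x i : B \in P -> x \in B -> is_min i B -> i != x -> par P x = i.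
Proof.
move=> BP xB mi nix; rewrite /par; case: pickP => [i' /andP[ni' /exists_inP[B' B'P /andP[xB' mi']]] | none] /=.
  have nB : ~~ is_min x B by apply: contra nix => mx; rewrite (is_min_uniq mi mx).
  have nB' : ~~ is_min x B' by apply: contra ni' => mx; rewrite (is_min_uniq mi' mx).
  have e := lp_nonmin_uniq BP B'P xB xB' nB nB'; subst B'.
  exact: is_min_uniq mi' mi.
have := none i; rewrite nix /=; move/negbT/negP => h; exfalso; apply: h.
by apply/exists_inP; exists B => //; rewrite xB.
Qed.

Lemma par_some x i : par P x = i -> i != x ->
  exists2 B, B \in P & (x \in B) && is_min i B.
Proof.
rewrite /par; case: pickP => [i' /andP[ni' /exists_inP[B' B'P h]] | none] /= <- ne.
  by exists B'.
by rewrite eqxx in ne.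
Qed.

Lemma codeOf_C : codeOf P \in codeC.
Proof.
rewrite inE; apply/forallP=> j; rewrite ffunE.
case: (eqVneq (par P j) j) => [->//|ne].
case: (par_some erefl ne) => B BP /andP[jB /andP[_ /forall_inP h]].
exact: h.
Qed.

Lemma blk_codeOf B i : B \in P -> is_min i B -> B = blk (codeOf P) i.
Proof.
move=> BP mi; apply/setP=> x; rewrite inE ffunE.
apply/idP/idP.
  move=> xB; case: (eqVneq x i) => //= nxi.
  by rewrite (par_spec BP xB mi) // eq_sym.
case/orP=> [/eqP -> | /eqP e]; first by case/andP: mi.
case: (eqVneq i x) => [<-|ne]; first by case/andP: mi.
case: (par_some e ne) => B' B'P /andP[xB' mi'].
by rewrite (lp_min_uniq BP B'P mi mi').
Qed.

Lemma keep_codeOf B i : B \in P -> is_min i B -> keep (codeOf P) i.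
Proof.
move=> BP mi; rewrite /keep -(blk_codeOf BP mi) ffunE.
case: (eqVneq (par P i) i) => //= ne.
case: (par_some erefl ne) => B' B'P /andP[iB' mi'].
have neB : B != B'.
  apply/negP=> /eqP e; subst B'; move: ne; by rewrite -(is_min_uniq mi mi') eqxx.
have /forall_inP/(_ i) := lp_nd BP B'P neB.
rewrite inE iB' (andP mi).1 /=.
have -> : is_min i B' = false.
  by apply/negP=> m; move: ne; rewrite (is_min_uniq mi' m) eqxx.
by rewrite /= mi /= andbT orbF; apply.
Qed.

Lemma LPof_codeOf : LPof (codeOf P) = P.
Proof.
apply/setP=> B; apply/idP/idP; last first.
  move=> BP; case: (lp_nonempty BP) => i mi.
  by rewrite (blk_codeOf BP mi); apply: imset_f; rewrite inE (keep_codeOf BP mi).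
case/imsetP=> i; rewrite inE => ki ->.
suff [B' B'P mi] : exists2 B', B' \in P & is_min i B'.
  by rewrite -(blk_codeOf B'P mi).
move: ki; rewrite /keep ffunE; case/orP=> [/eqP e | ].
  case: (lp_cover i) => B' B'P iB'; case: (lp_nonempty B'P) => m mm.
  case: (eqVneq m i) => [<-|ne]; first by exists B'.
  by have := par_spec B'P iB' mm ne; rewrite e => ei; rewrite ei eqxx in ne.
rewrite card_blk_gt1 => /forallPn [x]; rewrite negb_imply ffunE => /andP[/eqP e nxi].
have nix : i != x by rewrite eq_sym. case: (par_some e nix) => B' B'P /andP[_ mi]; by exists B'.
Qed.

End LPfacts.

Lemma count_LP (Q : {set {set T}} -> bool) :
  #|[set P | linked_partition P && Q P]| = #|[set a in codeC | Q (LPof a)]|.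
Proof.
have -> : [set P | linked_partition P && Q P] = LPof @: [set a in codeC | Q (LPof a)].
  apply/setP=> P; rewrite inE; apply/idP/idP.
    case/andP=> lp qP; apply/imsetP; exists (codeOf P); last by rewrite LPof_codeOf.
    by rewrite inE codeOf_C // LPof_codeOf.
  case/imsetP=> a; rewrite inE => /andP[aC qa] ->; by rewrite LPof_linked.
apply: card_in_imset => a b; rewrite !inE => /andP[aC _] /andP[bC _] e.
by rewrite -(@codeOfK a) ?inE // e codeOfK ?inE.
Qed.

Section Stats.
Variable a : {ffun T -> T}.
Hypothesis aC : a \in codeC.

Lemma keep_min_blk i j : keep a i -> is_min j (blk a i) -> i = j.
Proof. by move=> _ m; exact: is_min_uniq (min_blk i aC) m. Qed.

Lemma cover_mult_LPof j :
  cover_mult (LPof a) j = (1 + ((a j != j) && ~~ nochild a j))%N.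
Proof.
rewrite /cover_mult.
have -> : [set B in LPof a | j \in B] =
          blk a @: [set i | keep a i && ((j == i) || (a j == i))].
  apply/setP=> B; rewrite inE; apply/idP/idP.
    case/andP=> /imsetP[i]; rewrite inE => ki -> jB.
    by apply: imset_f; rewrite inE ki /=; move: jB; rewrite inE.
  case/imsetP=> i; rewrite inE => /andP[ki ji] ->.
  by rewrite inE ji andbT; apply: imset_f; rewrite inE.
rewrite card_imset; last exact: blk_inj.
rewrite (cardsD1 (a j)) inE keep_par eqxx orbT /= add1n; congr S.
case: (eqVneq (a j) j) => [e|ne] /=.
  rewrite (_ : _ :\ _ = set0) ?cards0 //; apply/setP=> i; rewrite !inE.
  rewrite e; case: (boolP (i == j)) => [/eqP->|nij]; first by rewrite eqxx. by rewrite eq_sym (negbTE nij) andbF.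
case: (boolP (nochild a j)) => nc /=.
  rewrite (_ : _ :\ _ = set0) ?cards0 //; apply/setP=> i; rewrite !inE.
  case: (eqVneq i (a j)) => //= nia; case: (eqVneq j i) => [<-|nji] /=.
    by rewrite keepE (negbTE ne) nc.
  by rewrite andbF.
rewrite [RHS](_ : _ = #|[set j]|); last by rewrite cards1. apply: eq_card=> i; rewrite !inE.
case: (eqVneq i j) => [->|nij] /=.
  by rewrite eq_sym ne keepE nc orbT.
by case: (eqVneq i (a j)) => //= _; rewrite andbF.
Qed.

Lemma singly_LPof j : singly_covered (LPof a) j = (a j == j) || nochild a j.
Proof.
rewrite /singly_covered cover_mult_LPof.
by case: (a j == j); case: (nochild a j).
Qed.

Lemma sc_minimal_LPof j : sc_minimal (LPof a) j = (a j == j).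
Proof.
rewrite /sc_minimal singly_LPof.
have -> : [exists B in LPof a, (j \in B) && is_min j B] = keep a j.
  apply/idP/idP.
    case/exists_inP=> B /imsetP[i]; rewrite inE => ki -> /andP[_ m].
    by rewrite -(keep_min_blk ki m).
  move=> kj; apply/exists_inP; exists (blk a j); first by apply: imset_f; rewrite inE.
  by rewrite blk_id min_blk.
by rewrite keepE; case: (a j == j); case: (nochild a j).
Qed.

Lemma sc_nonminimal_LPof j : sc_nonminimal (LPof a) j = (a j != j) && nochild a j.
Proof.
rewrite /sc_nonminimal singly_LPof.
have -> : [exists B in LPof a, (j \in B) && ~~ is_min j B] = (a j != j).
  apply/idP/idP.
    case/exists_inP=> B /imsetP[i]; rewrite inE => ki -> /andP[jB m].
    move: jB; rewrite inE; case/orP=> [/eqP e|/eqP e]; first by subst i; rewrite min_blk in m.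
    subst i; apply: contra m => /eqP e; rewrite e; exact: min_blk.
  move=> ne; apply/exists_inP; exists (blk a (a j)); first by apply: imset_f; rewrite inE keep_par.
  rewrite inE eqxx orbT /=; apply/negP=> m.
  by move: ne; rewrite (is_min_uniq (min_blk (a j) aC) m) eqxx.
by case: (a j == j); case: (nochild a j).
Qed.

Lemma num_sc_minimal_LPof : num_sc_minimal (LPof a) = #|[set j | a j == j]|.
Proof.
by rewrite /num_sc_minimal; apply: eq_card=> j; rewrite !inE sc_minimal_LPof.
Qed.

Lemma beta_LPof : beta (LPof a) = #|[set j | nochild a j]|.
Proof.
rewrite /beta.
have -> : [set B in LPof a | #|B| == 1%N] = blk a @: [set i | (a i == i) && nochild a i].
  apply/setP=> B; apply/idP/idP.
    rewrite inE => /andP[/imsetP[i]]; rewrite inE => ki -> c1.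
    apply: imset_f; rewrite inE.
    have nc : nochild a i by rewrite -[nochild _ _]negbK -card_blk_gt1 (eqP c1).
    by move: ki; rewrite keepE nc orbF => ->.
  case/imsetP=> i; rewrite inE => /andP[e nc] ->.
  rewrite inE; apply/andP; split; first by apply: imset_f; rewrite inE keepE e.
  have : ~~ (1 < #|blk a i|)%N by rewrite card_blk_gt1 nc.
  rewrite -leqNgt => h; rewrite eqn_leq h /= card_gt0; apply/set0Pn; exists i; exact: blk_id.
rewrite card_imset; last exact: blk_inj.
rewrite -(cardsID [set j | a j == j] [set j | nochild a j]) addnC; congr (_ + _).
  by apply: eq_card=> j; rewrite !inE andbC.
by apply: eq_card=> j; rewrite !inE sc_nonminimal_LPof andbC.
Qed.

End Stats.

End PartA.

Section PartB.
Variable n : nat.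
Local Notation T := 'I_n.
Implicit Types (a b : {ffun T -> T}).

Fixpoint sig a (m : nat) : {perm T} :=
  if m is m'.+1 then
    (if (insub m' : option T) is Some j then tperm j (a j) * sig a m' else sig a m')
  else 1.

Lemma sig_fix a : a \in codeC n -> forall m (x : T), (m <= x)%N -> sig a m x = x.
Proof.
move=> aC; elim=> [|m IH] x le /=; first by rewrite perm1.
case: insubP => [j _ vj|_]; last exact: IH (ltnW le).
have {}vj : nat_of_ord j = m := vj.
rewrite permM tpermD ?IH ?(ltnW le) //.
  by apply/negP=> /eqP e; move: le; rewrite -e vj ltnn.
apply/negP=> /eqP e; move: le; rewrite -e -vj => h.
by have := leq_ltn_trans (inC aC j) h; rewrite ltnn.
Qed.

Lemma porbit_fixed (s : {perm T}) x : s x = x -> porbit s x = [set x].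
Proof.
move=> sx; apply/setP=> y; rewrite inE; apply/idP/eqP.
  by case/porbitP=> i ->; rewrite permX_fix.
by move=> ->; exact: porbit_id.
Qed.

Lemma card_porbits1 : #|porbits (1 : {perm T})| = n.
Proof.
have -> : porbits (1 : {perm T}) = [set [set x] | x : T].
  apply/setP=> B; apply/imsetP/imsetP=> -[x _ ->]; exists x => //;
  by rewrite porbit_fixed ?perm1.
by rewrite card_imset ?card_ord //; exact: set1_inj.
Qed.

Lemma sig_cycles a : a \in codeC n -> forall m, (m <= n)%N ->
  (#|porbits (sig a m)| + #|[set j : T | (j < m)%N && (a j != j)]|)%N = n.
Proof.
move=> aC; elim=> [|m IH] le /=.
  rewrite card_porbits1 (_ : [set j : T | _] = set0) ?cards0 ?addn0 //.
case: insubP => [j _ vj|]; last by rewrite le.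
have {}vj : nat_of_ord j = m := vj.
have := porbits_mul_tperm (sig a m) j (a j).
rewrite porbit_sym porbit_fixed; last by apply: sig_fix => //; exact: (eq_leq (esym vj)).
rewrite /= in_set1 eq_sym.
have -> : #|[set j0 : T | (j0 < m.+1)%N && (a j0 != j0)]| =
          (#|[set j0 : T | (j0 < m)%N && (a j0 != j0)]| + (a j != j))%N.
  rewrite (cardsD1 j) inE vj ltnSn /=.
  case: (eqVneq (a j) j) => [e|ne] /=.
    rewrite add0n addn0; apply: eq_card=> k; rewrite !inE.
    case: (eqVneq k j) => [->|nkj] /=; first by rewrite e eqxx andbF.
    by rewrite ltnS leq_eqVlt -vj (inj_eq val_inj) (negbTE nkj).
  rewrite add1n addn1; congr S; apply: eq_card=> k; rewrite !inE.
  case: (eqVneq k j) => [->|nkj] /=; first by rewrite vj ltnn.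
  by rewrite ltnS leq_eqVlt -vj (inj_eq val_inj) (negbTE nkj).
move: (IH (ltnW le)); rewrite (eq_sym j); set x := #|porbits (tperm _ _ * _)|; set y := #|porbits (sig a m)|; set z := #|[set _ | _ & _]|; case: (a j != j); rewrite -!mul2n /=; clearbody x y z; lia.
Qed.

Lemma sig_val a : a \in codeC n ->
  #|porbits (sig a n)| = #|[set j : T | a j == j]|.
Proof.
move=> aC; have := sig_cycles aC (leqnn n).
have := cardsC [set j : T | a j == j]; rewrite card_ord.
have -> : #|[set j : T | (j < n)%N && (a j != j)]| = #|~: [set j : T | a j == j]|.
  by apply: eq_card=> j; rewrite !inE ltn_ord.
set x := #|porbits _|; set y := #|[set j | _]|; set z := #|~: _|.
clearbody x y z; lia.
Qed.

Lemma sig_inj a b : a \in codeC n -> b \in codeC n -> sig a n = sig b n -> a = b.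
Proof.
move=> aC bC.
suff H : forall m, (m <= n)%N -> sig a m = sig b m -> forall j : T, (j < m)%N -> a j = b j.
  by move=> e; apply/ffunP=> j; apply: H e j (ltn_ord j).
elim=> [|m IH] le //= e j ljm.
move: e; case: insubP => [j0 _ vj0|]; last by rewrite le.
have {}vj0 : nat_of_ord j0 = m := vj0.
move=> e.
have fa : (tperm j0 (a j0) * sig a m)%g (a j0) = j0.
  by rewrite permM tpermR sig_fix // vj0.
have fb : (tperm j0 (b j0) * sig b m)%g (b j0) = j0.
  by rewrite permM tpermR sig_fix // vj0.
have ab : a j0 = b j0.
  by apply: (@perm_inj _ (tperm j0 (a j0) * sig a m)%g); rewrite fa e fb.
have e' : sig a m = sig b m by move: e; rewrite ab => /mulgI.
move: ljm; rewrite ltnS leq_eqVlt; case/orP=> [/eqP ejm | ljm].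
  by have -> : j = j0 by apply/val_inj; rewrite /= ejm vj0.
exact: IH (ltnW le) e' j ljm.
Qed.

End PartB.

Section PartC.
Variable n : nat.
Local Notation T := 'I_n.
Implicit Types (s t : {perm T}).

Definition nsl s (p q : T) : bool :=
  [&& (q < p)%N, (s q < s p)%N &
      [forall r : T, ((q < r)%N && (r < p)%N) ==> (s p < s r)%N]].

Definition phi s : {ffun T -> T} :=
  [ffun v => if [pick q | nsl s ((s^-1)%g v) q] is Some q then s q else v].

Lemma phi_at s (p : T) :
  phi s (s p) = if [pick q | nsl s p q] is Some q then s q else s p.
Proof. by rewrite ffunE permK. Qed.

Lemma nsl_uniq s (p q1 q2 : T) : nsl s p q1 -> nsl s p q2 -> q1 = q2.
Proof.
wlog lt : q1 q2 / (q1 <= q2)%N.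
  by move=> W h1 h2; case: (leqP q1 q2) => l; [apply: W | apply/esym/W => //; apply: ltnW].
case/and3P=> l1 _ /forallP f1 /and3P[l2 s2 _].
case: (ltngtP q1 q2) lt => // [h _ |/val_inj //].
have := f1 q2; rewrite h l2 /= => h'.
by have := ltn_trans s2 h'; rewrite ltnn.
Qed.

Lemma nsl_exists s (p q0 : T) : (q0 < p)%N -> (s q0 < s p)%N -> exists q, nsl s p q.
Proof.
move=> l0 s0.
have P0 : (q0 < p)%N && (s q0 < s p)%N by rewrite l0 s0.
case: (@arg_maxnP _ q0 (fun q : T => (q < p)%N && (s q < s p)%N) (fun q : T => nat_of_ord q) P0) => q /andP[lq sq] mx.
exists q; rewrite /nsl lq sq /=; apply/forallP=> r; apply/implyP=> /andP[qr rp].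
rewrite ltn_neqAle; apply/andP; split.
  by apply/negP=> /eqP/val_inj e; move: rp; rewrite (perm_inj e) ltnn.
rewrite leqNgt; apply/negP=> h.
by have := mx r; rewrite rp h /= => /(_ isT); rewrite leqNgt qr.
Qed.

Lemma phiC s : phi s \in codeC n.
Proof.
rewrite inE; apply/forallP=> v; rewrite ffunE.
case: pickP => [q /and3P[_ h _] | _] //.
by rewrite permKV in h; apply: ltnW.
Qed.

Lemma phi_child s (p p' : T) : ((phi s (s p') == s p) && (p' != p)) = nsl s p' p.
Proof.
rewrite phi_at; case: pickP => [q h | none].
  rewrite (inj_eq perm_inj); apply/idP/idP.
    by case/andP=> /eqP <-.
  move=> h'; rewrite (nsl_uniq h h') eqxx /=.
  by apply/negP=> /eqP e; move: h'; rewrite e /nsl ltnn.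
rewrite (inj_eq perm_inj) none; by case: (p' == p).
Qed.

Lemma nochild_phi s (p : T) :
  nochild (phi s) (s p) = ~~ [exists p' : T, (nat_of_ord p' == p.+1) && (s p < s p')%N].
Proof.
have -> : nochild (phi s) (s p) = ~~ [exists p', nsl s p' p].
  apply/forallP/negP.
    move=> h /existsP[p'] ns.
    have := h (s p'); rewrite (inj_eq perm_inj) => /implyP.
    by rewrite -phi_child in ns; case/andP: ns => -> /negbTE -> /(_ isT).
  move=> h v; apply/implyP=> e; apply/negPn/negP=> nv.
  apply: h; apply/existsP; exists ((s^-1)%g v); rewrite -phi_child permKV e /=.
  apply: contra nv => /eqP <-; by rewrite permKV.
congr negb; apply/existsP/existsP=> -[p' h].
  case/and3P: h => l sl /forallP f.
  case: (ltngtP p'  p.+1) l => // [h _ | e _]; last by exists p'; rewrite e eqxx sl.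
  have pn : (p.+1 < n)%N by apply: ltn_trans h (ltn_ord p').
  exists (Ordinal pn); rewrite eqxx /=.
  have := f (Ordinal pn); rewrite /= ltnSn h /= => h2.
  exact: ltn_trans sl h2.
case/andP: h => /eqP e sl; exists p'; rewrite /nsl e ltnSn sl /=.
apply/forallP=> r; apply/implyP=> /andP[a b]; by move: b; rewrite ltnS leqNgt a.
Qed.

Lemma phi_neq s t (i : T) : (forall q : T, (q < i)%N -> s q = t q) -> (s i < t i)%N ->
  phi s (t i) != phi t (t i).
Proof.
move=> agree lt.
set p' := (s^-1)%g (t i).
have sp' : s p' = t i by rewrite permKV.
have ip' : (i < p')%N.
  case: (ltngtP i p') => // [h|h].
    have := agree _ h; rewrite sp' => /perm_inj e; by move: h; rewrite e ltnn.
  have e : p' = i by apply: val_inj.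
  by move: lt; rewrite -sp' e ltnn.
have [q' nq'] : exists q, nsl s p' q by apply: (nsl_exists ip'); rewrite sp'.
have iq' : (i <= q')%N.
  rewrite leqNgt; apply/negP=> h; case/and3P: nq' => _ _ /forallP/(_ i).
  by rewrite h ip' /= sp' ltnNge (ltnW lt).
rewrite -{1}sp' phi_at; case: pickP => [q'' h''|none]; last by have := none q'; rewrite nq'.
rewrite (nsl_uniq h'' nq') phi_at; case: pickP => [q h | _].
  case/and3P: h => lq _ _; rewrite -agree //.
  apply/negP=> /eqP /perm_inj e; by move: iq'; rewrite e leqNgt lq.
rewrite -sp'; apply/negP=> /eqP /perm_inj e; case/and3P: nq' => h _ _.
by move: h; rewrite e ltnn.
Qed.

Lemma phi_inj : injective phi.
Proof.
move=> s t e; apply/permP=> x; apply/eqP/negPn/negP=> ne.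
have ex : exists i : T, s i != t i by exists x.
case: ex => i0 ni0.
case: (@arg_minnP _ i0 (fun i : T => s i != t i) (fun i : T => nat_of_ord i) ni0) => i ni mn.
have agree : forall q : T, (q < i)%N -> s q = t q.
  move=> q lq; apply/eqP/negPn/negP=> nq.
  by have := mn q nq; rewrite leqNgt lq.
case: (ltngtP (s i) (t i)) => [h|h|/val_inj h]; last by rewrite h eqxx in ni.
  by have := phi_neq agree h; rewrite e eqxx.
have agree' : forall q : T, (q < i)%N -> t q = s q by move=> q /agree ->.
by have := phi_neq agree' h; rewrite e eqxx.
Qed.

Lemma leaves_phi s : (0 < n)%N ->
  #|[set v | nochild (phi s) v]| = (num_descents s).+1.
Proof.
move=> n0.
have -> : #|[set v | nochild (phi s) v]| =
          #|[set p : T | ~~ [exists p' : T, (nat_of_ord p' == p.+1) && (s p < s p')%N]]|.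
  rewrite -[RHS](card_imset _ (@perm_inj _ s)); apply: eq_card=> v.
  rewrite inE; apply/idP/imsetP.
    move=> h; exists ((s^-1)%g v); last by rewrite permKV. by rewrite inE -nochild_phi permKV.
  by case=> p; rewrite inE -nochild_phi => h ->.
set L := [set p : T | _].
have ltl : (n.-1 < n)%N by rewrite prednK.
set lst := Ordinal ltl.
have lastL : lst \in L.
  rewrite inE; apply/negP=> /existsP[p' /andP[/eqP e _]].
  by have := ltn_ord p'; rewrite e /= prednK // ltnn.
rewrite (cardsD1 lst) lastL add1n; congr S.
rewrite /num_descents; apply: eq_card=> p; rewrite !inE.
case: (eqVneq p lst) => [->|ne] /=.
  apply/esym/negbTE/negP=> /existsP[j /andP[/eqP e _]].
  by have := ltn_ord j; rewrite e /= prednK // ltnn.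
have pn : (p.+1 < n)%N.
  rewrite ltn_neqAle ltn_ord andbT; apply: contra ne => /eqP e.
  apply/eqP/val_inj => /=; exact: (congr1 predn e).
apply/idP/idP.
  move=> h; apply/existsP; exists (Ordinal pn); rewrite eqxx /=.
  rewrite ltn_neqAle; apply/andP; split.
    apply/negP=> /eqP/val_inj/perm_inj e; move: (f_equal val e) => /= h2; lia.
  rewrite leqNgt; apply: contra h => h; apply/existsP; exists (Ordinal pn).
  by rewrite eqxx.
case/existsP=> j /andP[/eqP e sj]; apply/negP=> /existsP[j' /andP[/eqP e' sj']].
have jj : j = j' by apply: val_inj; exact: (etrans e (esym e')).
by subst j'; have := ltn_trans sj sj'; rewrite ltnn.
Qed.

End PartC.

Section PartD.
Variable n : nat.
Local Notation T := 'I_n.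

Lemma card_codeC : #|codeC n| = n`!.
Proof.
apply/eqP; rewrite eqn_leq; apply/andP; split.
  rewrite -(card_in_imset (f := fun a => sig a n)); last first.
    by move=> a b aC bC; apply: sig_inj.
  by rewrite -card_Sn max_card.
rewrite -card_Sn -(card_imset (pred_of_simpl predT) (@phi_inj n)).
apply: subset_leq_card; apply/subsetP=> a /imsetP[s _ ->]; exact: phiC.
Qed.

Lemma sig_onto : (fun a => sig a n) @: codeC n = [set: {perm T}].
Proof.
apply/eqP; rewrite eqEcard subsetT cardsT card_Sn -card_codeC /=.
by rewrite (card_in_imset (f := fun a => sig a n)) // => a b aC bC; apply: sig_inj.
Qed.

Lemma phi_onto : (@phi n) @: [set: {perm T}] = codeC n.
Proof.
apply/eqP; rewrite eqEcard card_codeC card_imset ?cardsT ?card_Sn ?leqnn; last exact: phi_inj.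
by rewrite andbT; apply/subsetP=> a /imsetP[s _ ->]; exact: phiC.
Qed.

End PartD.

Theorem corollary3p5 (n : nat) (hn : (1 <= n)%N) :
  #|[set P : {set {set 'I_n}} | linked_partition P]| = n`!
  /\ (forall k : nat,
        #|[set P : {set {set 'I_n}} | linked_partition P && (num_sc_minimal P == k)]|
        = stirling1 n k)
  /\ (forall k : nat,
        #|[set P : {set {set 'I_n}} | linked_partition P && (beta P == k)]|
        = eulerian n k).
Proof.
split; [|split].
- have := count_LP (fun _ : {set {set 'I_n}} => true).
  rewrite (eq_card (B := [set P : {set {set 'I_n}} | linked_partition P])); last first.
    by move=> P; rewrite !inE andbT.
  move=> ->; rewrite -card_codeC; apply: eq_card=> a; by rewrite !inE andbT.
- move=> k; rewrite count_LP.
  rewrite (eq_card (B := [set a in codeC n | #|[set j | a j == j]| == k])); last first.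
    move=> a; rewrite !inE; case: (boolP [forall j, _]) => aC //=.
    by rewrite num_sc_minimal_LPof // inE.
  rewrite /stirling1 -(card_in_imset (f := fun a : {ffun 'I_n -> 'I_n} => sig a n)); last first.
    by move=> a b; rewrite !inE => /andP[aC _] /andP[bC _]; apply: sig_inj; rewrite ?inE.
  apply: (@eq_card (perm_of _)) => s; rewrite inE /num_cycles; apply/imsetP/idP.
    by case=> a; rewrite inE => /andP[aC e] ->; rewrite sig_val.
  move=> e; have : s \in (fun a => sig a n) @: codeC n by rewrite sig_onto inE.
  case/imsetP=> a aC es; exists a => //; by rewrite inE aC -sig_val // -es.
- move=> k; rewrite count_LP.
  rewrite (eq_card (B := [set a in codeC n | #|[set j | nochild a j]| == k])); last first.
    move=> a; rewrite !inE; case: (boolP [forall j, _]) => aC //=.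
    by rewrite beta_LPof // inE.
  rewrite /eulerian -(card_imset _ (@phi_inj n)).
  apply: eq_card=> a; rewrite inE; apply/idP/imsetP.
    case/andP=> aC e; move: aC; rewrite -phi_onto => /imsetP[s _ as_].
    by exists s => //; rewrite inE -leaves_phi // -as_.
  by case=> s; rewrite inE => e ->; rewrite phiC leaves_phi.
Qed.
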